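(* If $d$ is unknown, then any non-adaptive deterministic group testing algorithm on $n$ items that detects one defective item must make at least $\Omega(n)$ tests.
   Context: Group testing: items $X=[n]$, unknown defective set $I\subseteq X$ with $d=|I|$. A test $Q\subseteq X$ has answer $1$ if $Q\cap I\neq\emptyset$ and $0$ otherwise. A non-adaptive algorithm fixes all its tests in advance, then computes its output from the answers. ''$d$ is unknown'' means the algorithm gets no information about $|I|$ and must, for every nonempty defective set $I\subseteq[n]$, output an element of $I$. *)

(* Defs.v *)
From mathcomp Require Import all_boot.
Set Implicit Arguments. Unset Strict Implicit. Unset Printing Implicit Defensive.

(* Items are 'I_n. A non-adaptive algorithm with m tests is a family of tests
   Q : 'I_m -> {set 'I_n} fixed in advance, plus a decoder mapping the answer
   vector to an item. *)

Definition test_answer (n : nat) (Q I : {set 'I_n}) : bool := Q :&: I != set0.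

Definition answers (n m : nat) (Q : 'I_m -> {set 'I_n}) (I : {set 'I_n})
  : {ffun 'I_m -> bool} := [ffun i => test_answer (Q i) I].

(* The algorithm (Q, dec) detects one defective item with d unknown:
   for every nonempty defective set I, the output lies in I. *)
Definition detects_one_defective (n m : nat) (Q : 'I_m -> {set 'I_n})
  (dec : {ffun 'I_m -> bool} -> 'I_n) : Prop :=
  forall I : {set 'I_n}, I != set0 -> dec (answers Q I) \in I.

(* Main.v *)
Require Import Defs.
From mathcomp Require Import all_boot.

Lemma hit_bound (n m : nat) (Q : 'I_m -> {set 'I_n})
  (dec : {ffun 'I_m -> bool} -> 'I_n) :
  detects_one_defective Q dec ->
  forall k (I : {set 'I_n}), #|I| = k.+1 ->
    k <= #|[set i | test_answer (Q i) I]|.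
Proof.
move=> H; elim=> [//|k IH] I cI.
have I0 : I != set0 by apply/eqP => E; rewrite E cards0 in cI.
set x := dec (answers Q I).
have xI : x \in I by exact: H.
set J := I :\ x.
have cJ : #|J| = k.+1.
  by move: cI; rewrite (cardsD1 x I) xI add1n => -[].
have J0 : J != set0 by apply/eqP => E; rewrite E cards0 in cJ.
have := IH J cJ => le1.
suff pr : [set i | test_answer (Q i) J] \proper [set i | test_answer (Q i) I].
  by have := proper_card pr; apply: leq_trans.
rewrite properEneq; apply/andP; split.
  apply/eqP => E.
  have EA : answers Q J = answers Q I.
    apply/ffunP => i; rewrite !ffunE.
    have := congr1 (fun S : {set 'I_m} => i \in S) E; by rewrite /= !inE.
  have := H J J0; rewrite EA -/x /J !inE eqxx //.
apply/subsetP => i; rewrite !inE /test_answer => /set0Pn [y].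
rewrite !inE => /andP [yQ /andP [_ yI]].
by apply/set0Pn; exists y; rewrite inE yQ yI.
Qed.

Theorem theorem10 :
  exists k N0 : nat, 0 < k /\
    forall (n m : nat) (Q : 'I_m -> {set 'I_n})
           (dec : {ffun 'I_m -> bool} -> 'I_n),
      N0 <= n -> detects_one_defective Q dec -> n <= k * m.
Proof.
exists 2, 2; split => // n m Q dec Hn H.
have cT : #|[set: 'I_n]| = n.-1.+1 by rewrite cardsT card_ord prednK // ltnW.
have := @hit_bound n m Q dec H _ _ cT.
have := max_card (mem [set i | test_answer (Q i) [set: 'I_n]]).
rewrite card_ord => h1 h2.
have h : n.-1 <= m := leq_trans h2 h1.
move: h Hn; case: n Q dec H cT h1 h2 => [//|n'] _ _ _ _ _ _ /= h Hn.
rewrite mul2n -addnn -addn1; apply: leq_add => //.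
by move: Hn; rewrite ltnS => Hn; apply: leq_trans Hn h.
Qed.
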